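(* Let $\mathcal T$ be a TBox in which every axiom $\tau$ has the form $\forall G_1.A_1\sqcap\cdots\sqcap\forall G_n.A_n\sqsubseteq\forall H.B$ with $n\ge1$, regular role expressions $G_1,\dots,G_n,H$ and concept names $A_1,\dots,A_n,B$, and let $L,R$ be concept names. Let $\mathcal G_{\mathcal T}$ be the parity pushdown game constructed from $\mathcal T$, $L$, $R$ as described in the context. Then Eve wins $\mathcal G_{\mathcal T}$ from the configuration $(q_R,\bot_s)$ if and only if $L\sqsubseteq_{\mathcal T}R$.
   Context: Logic: $N_C$, $N_R$ are disjoint countably infinite sets of concept names and role names. Regular role expressions: $E ::= \emptyset \mid \varepsilon \mid r \mid (E+E) \mid (EE) \mid E^{*}$ ($r\in N_R$), languages $\mathcal L(E)\subseteq N_R^*$ as usual. Concept descriptions: $C ::= A \mid \top \mid (C\sqcap C) \mid \forall E.C$ ($A\in N_C$). An interpretation $\mathcal I$ has nonempty domain $\Delta^{\mathcal I}$, $A^{\mathcal I}\subseteq\Delta^{\mathcal I}$, $r^{\mathcal I}\subseteq(\Delta^{\mathcal I})^2$; $E^{\mathcal I}$ is the union over $r_1\cdots r_n\in\mathcal L(E)$ of $r_1^{\mathcal I}\circ\cdots\circ r_n^{\mathcal I}$ (identity for the empty word); $\top^{\mathcal I}=\Delta^{\mathcal I}$, $\sqcap$ is intersection, $(\forall E.C)^{\mathcal I}=\{x\mid y\in C^{\mathcal I}$ whenever $(x,y)\in E^{\mathcal I}\}$. $\mathcal I$ is a model of $\mathcal T$ if $K^{\mathcal I}\subseteq M^{\mathcal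 I}$ for every axiom $K\sqsubseteq M$ of $\mathcal T$; $L\sqsubseteq_{\mathcal T}R$ means $L^{\mathcal I}\subseteq R^{\mathcal I}$ in every model $\mathcal I$ of $\mathcal T$. Parity pushdown games: a game is $(P_A,P_E,\Gamma,\Delta,\Omega)$ with finite disjoint sets $P_A,P_E$ of control states of Adam and Eve ($P=P_A\cup P_E$), finite stack alphabet $\Gamma$, finite set of rules $\Delta\subseteq(P\times\Gamma^* )\times(P\times\Gamma^* )$, priority function $\Omega:P\to\mathbb N$. Configurations are pairs $(p,w)\in P\times\Gamma^*$ (top of stack = rightmost letter). For each rule $((p,\alpha),(q,\beta))\in\Delta$ and each $w\in\Gamma^*$ there is a move $(p,w\alpha)\to(q,w\beta)$. A play from $c$ is a maximal sequence of configurations starting in $c$ with consecutive elements related by $\to$ (infinite, or ending in a configuration with no move). A finite play is lost by the owner of the state of its last configuration; an infinite play is won by Eve iff the largest priority of states occurring infinitely often is even. A strategy of Eve assigns to every configuration with state in $P_E$ that has a move one of its successors; a play is consistent with it if Eve's moves follow it. Eve wins from $c$ if she has a strategy such that every play from $c$ consistent with it is won by Eve. Construction of $\mathcal G_{\mathcal T}$: let $\Sigma_C$ be the set of concept names occurring in $\mathcal T$ together with $L,R$, and $\Sigma_R$ the set of role names occurring in $\mathcal T$. Let $\Gamma=\Sigma_R\cup\{\bot_s\}$ with a fresh bottom symbol $\bot_s$. For each $A\in\Sigma_C$ there is an Eve state $q_A$. For each axiom $\tau=(\forall G_1.A_1\sqcap\cdots\sqcap\forall G_n.A_n\sqsubseteq\forall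 H.B)$ of $\mathcal T$ fix nondeterministic finite automata $\mathcal A_H=(Q_H,\Sigma_R,\delta_H,q_{H,0},F_H)$ with language $\mathcal L(H)$ and $\mathcal A_{G_i}=(Q_{G_i},\Sigma_R,\delta_{G_i},q_{G_i,0},F_{G_i})$ with language $\mathcal L(G_i)$, all state sets (over all axioms) pairwise disjoint and disjoint from the other game states. States of $\mathcal A_H$ are Eve states; $p_\tau$ and states of the $\mathcal A_{G_i}$ are Adam states. Rules for $\tau$: $((q_B,\varepsilon),(q,\varepsilon))$ for each $q\in F_H$; $((q,r),(p,\varepsilon))$ for each transition $p\xrightarrow{r}q$ of $\mathcal A_H$; $((q_{H,0},\varepsilon),(p_\tau,\varepsilon))$; and for each $i$: $((p_\tau,\varepsilon),(q_{G_i,0},\varepsilon))$, $((p,\varepsilon),(q,r))$ for each transition $p\xrightarrow{r}q$ of $\mathcal A_{G_i}$, and $((q,\varepsilon),(q_{A_i},\varepsilon))$ for each $q\in F_{G_i}$. Additionally there is an Adam state $p_{\mathrm{win}}$ with the single rule $((q_L,\bot_s),(p_{\mathrm{win}},\bot_s))$ (and no rule leaving $p_{\mathrm{win}}$). $\Omega(p)=0$ for $p\in P_A$ and $\Omega(p)=1$ for $p\in P_E$. *)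

(* Defs.v *)
From Stdlib Require Import List Arith.
Import ListNotations.

Definition CN := nat.
Definition RN := nat.

Inductive regex : Type :=
| REmpty : regex
| REps : regex
| RRole : RN -> regex
| RPlus : regex -> regex -> regex
| RCat : regex -> regex -> regex
| RStar : regex -> regex.

Inductive lang : regex -> list RN -> Prop :=
| lang_eps : lang REps []
| lang_role r : lang (RRole r) [r]
| lang_plusl E F w : lang E w -> lang (RPlus E F) w
| lang_plusr E F w : lang F w -> lang (RPlus E F) w
| lang_cat E F u v : lang E u -> lang F v -> lang (RCat E F) (u ++ v)
| lang_star0 E : lang (RStar E) []
| lang_starS E u v : lang E u -> lang (RStar E) v -> lang (RStar E) (u ++ v).

Fixpoint regex_roles (E : regex) : list RN :=
  match E with
  | REmpty | REps => []
  | RRole r => [r]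
  | RPlus E F | RCat E F => regex_roles E ++ regex_roles F
  | RStar E => regex_roles E
  end.

Inductive concept : Type :=
| CName : CN -> concept
| CTop : concept
| CAnd : concept -> concept -> concept
| CAll : regex -> concept -> concept.

Record interp : Type := {
  dom : Type;
  dom_inhabited : inhabited dom;
  cint : CN -> dom -> Prop;
  rint : RN -> dom -> dom -> Prop }.

Fixpoint word_rel (I : interp) (w : list RN) (x y : dom I) : Prop :=
  match w with
  | [] => x = y
  | r :: w' => exists z, rint I r x z /\ word_rel I w' z y
  end.

Definition regex_rel (I : interp) (E : regex) (x y : dom I) : Prop :=
  exists w, lang E w /\ word_rel I w x y.

Fixpoint csem (I : interp) (C : concept) : dom I -> Prop :=
  match C with
  | CName A => cint I A
  | CTop => fun _ => True
  | CAnd C D => fun x => csem I C x /\ csem I D x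
  | CAll E C => fun x => forall y, regex_rel I E x y -> csem I C y
  end.

(* An axiom  forall G1.A1 ⊓ ... ⊓ forall Gn.An ⊑ forall H.B  *)
Record rax : Type := {
  ax_lhs : list (regex * CN);
  ax_H : regex;
  ax_B : CN }.

Fixpoint conj_all (l : list (regex * CN)) : concept :=
  match l with
  | [] => CTop
  | [(G, A)] => CAll G (CName A)
  | (G, A) :: l' => CAnd (CAll G (CName A)) (conj_all l')
  end.

Definition ax_lhs_concept (ax : rax) : concept := conj_all (ax_lhs ax).
Definition ax_rhs_concept (ax : rax) : concept := CAll (ax_H ax) (CName (ax_B ax)).

Definition TBox := list rax.

Definition is_model (I : interp) (T : TBox) : Prop :=
  forall ax, In ax T ->
    forall x, csem I (ax_lhs_concept ax) x -> csem I (ax_rhs_concept ax) x.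

Definition subsumed (T : TBox) (L R : CN) : Prop :=
  forall I : interp, is_model I T ->
    forall x, csem I (CName L) x -> csem I (CName R) x.

Definition sigmaR (T : TBox) : list RN :=
  flat_map (fun ax => regex_roles (ax_H ax)
                      ++ flat_map (fun GA => regex_roles (fst GA)) (ax_lhs ax)) T.

(* States are natural numbers; the (finite) state set is implicit in the
   initial state, transitions and final states. *)
Record nfa : Type := {
  nfa_trans : list (nat * RN * nat);   (* (p, r, q) : p --r--> q *)
  nfa_init : nat;
  nfa_final : list nat }.

Inductive nfa_run (A : nfa) : nat -> list RN -> nat -> Prop :=
| run_nil p : nfa_run A p [] p
| run_cons p r q w s : In (p, r, q) (nfa_trans A) -> nfa_run A q w s ->
                       nfa_run A p (r :: w) s.

Definition nfa_lang (A : nfa) (w : list RN) : Prop :=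
  exists q, In q (nfa_final A) /\ nfa_run A (nfa_init A) w q.

Section Game.
Variables (P G : Type) (is_eve : P -> bool)
          (Delta : list ((P * list G) * (P * list G))) (Omega : P -> nat).

Definition config : Type := (P * list G)%type.

(* top of stack = rightmost letter *)
Definition move (c c' : config) : Prop :=
  exists p alpha q beta w,
    In ((p, alpha), (q, beta)) Delta /\ c = (p, w ++ alpha) /\ c' = (q, w ++ beta).

Definition stuck (c : config) : Prop := forall c', ~ move c c'.

Definition eve_strategy (s : config -> config) : Prop :=
  forall c, is_eve (fst c) = true -> (exists c', move c c') -> move c (s c).

Definition inf_often (f : nat -> config) (p : P) : Prop :=
  forall N, exists n, N <= n /\ fst (f n) = p.

Definition parity_win (f : nat -> config) : Prop :=
  exists p, inf_often f p /\ Nat.even (Omega p) = true /\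
            forall q, inf_often f q -> Omega q <= Omega p.

Definition eve_wins (c : config) : Prop :=
  exists s, eve_strategy s /\
    (forall (n : nat) (f : nat -> config),
        f 0 = c ->
        (forall i, i < n -> move (f i) (f (S i))) ->
        stuck (f n) ->
        (forall i, i < n -> is_eve (fst (f i)) = true -> f (S i) = s (f i)) ->
        is_eve (fst (f n)) = false) /\
    (forall f : nat -> config,
        f 0 = c ->
        (forall i, move (f i) (f (S i))) ->
        (forall i, is_eve (fst (f i)) = true -> f (S i) = s (f i)) ->
        parity_win f).
End Game.

(* Game states; NFA states are tagged with the axiom index (and the conjunct
   index for the A_{G_j}), which makes all state sets pairwise disjoint. *)
Inductive gstate : Type :=
| QC : CN -> gstate
| QH : nat -> nat -> gstate
| Ptau : nat -> gstate
| QG : nat -> nat -> nat -> gstate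
| Pwin : gstate.

(* stack alphabet: Some r = role name r, None = bottom symbol ⊥_s *)
Definition gsym := option RN.

Definition g_is_eve (p : gstate) : bool :=
  match p with
  | QC _ | QH _ _ => true
  | _ => false
  end.

Definition g_prio (p : gstate) : nat := if g_is_eve p then 1 else 0.

Fixpoint index_from {A : Type} (k : nat) (l : list A) : list (nat * A) :=
  match l with
  | [] => []
  | x :: l' => (k, x) :: index_from (S k) l'
  end.

Definition grule := ((gstate * list gsym) * (gstate * list gsym))%type.

Definition axiom_rules (nfaH : nat -> nfa) (nfaG : nat -> nat -> nfa)
    (i : nat) (ax : rax) : list grule :=
  let AH := nfaH i in
  map (fun q => ((QC (ax_B ax), []), (QH i q, []))) (nfa_final AH)
  ++ map (fun t => match t with (p, r, q) => ((QH i q, [Some r]), (QH i p, [])) end)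
         (nfa_trans AH)
  ++ [((QH i (nfa_init AH), []), (Ptau i, []))]
  ++ flat_map (fun jGA => match jGA with (j, (_, Aj)) =>
        let AG := nfaG i j in
        [((Ptau i, []), (QG i j (nfa_init AG), []))]
        ++ map (fun t => match t with (p, r, q) => ((QG i j p, []), (QG i j q, [Some r])) end)
               (nfa_trans AG)
        ++ map (fun q => ((QG i j q, []), (QC Aj, []))) (nfa_final AG)
        end) (index_from 0 (ax_lhs ax)).

Definition game_rules (T : TBox) (L : CN) (nfaH : nat -> nfa)
    (nfaG : nat -> nat -> nfa) : list grule :=
  ((QC L, [None]), (Pwin, [None]))
  :: flat_map (fun iax => axiom_rules nfaH nfaG (fst iax) (snd iax)) (index_from 0 T).

Definition GT_eve_wins (T : TBox) (L : CN) (nfaH : nat -> nfa)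
    (nfaG : nat -> nat -> nfa) (c : gstate * list gsym) : Prop :=
  eve_wins gstate gsym g_is_eve (game_rules T L nfaH nfaG) g_prio c.

Definition good_automata (T : TBox) (nfaH : nat -> nfa)
    (nfaG : nat -> nat -> nfa) : Prop :=
  forall i ax, nth_error T i = Some ax ->
    (forall w, nfa_lang (nfaH i) w <-> lang (ax_H ax) w) /\
    (forall p r q, In (p, r, q) (nfa_trans (nfaH i)) -> In r (sigmaR T)) /\
    (forall j G A, nth_error (ax_lhs ax) j = Some (G, A) ->
       (forall w, nfa_lang (nfaG i j) w <-> lang G w) /\
       (forall p r q, In (p, r, q) (nfa_trans (nfaG i j)) -> In r (sigmaR T))).

(* Main.v *)
Require Import Defs.
From Stdlib Require Import List Arith Lia Classical ClassicalEpsilon Cantor.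
Import ListNotations.

Lemma nat_min (Q : nat -> Prop) : (exists n, Q n) -> exists n, Q n /\ forall m, Q m -> n <= m.
Proof.
  intros [n Hn]. revert Hn. induction n as [n IH] using (well_founded_induction lt_wf).
  intros Hn. destruct (classic (exists m, Q m /\ m < n)) as [[m [Hm Hlt]]|Hno].
  - exact (IH m Hlt Hm).
  - exists n. split; auto. intros m Hm. destruct (le_lt_dec n m); auto.
    exfalso; apply Hno; eauto.
Qed.

Lemma enc_min (I : Type) (enc : I -> nat) (Q : I -> Prop) :
  (exists k, Q k) -> exists k, Q k /\ forall k', Q k' -> enc k <= enc k'.
Proof.
  intros [k Hk].
  destruct (nat_min (fun n => exists k, Q k /\ enc k = n)) as [n [[k0 [Hk0 He]] Hmin]]; eauto.
  exists k0. split; auto. intros k' Hk'. subst. apply Hmin. eauto.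
Qed.

Lemma pigeon {A : Type} (l : list A) (g : nat -> A) (Q : A -> Prop) :
  (forall N, exists n, N <= n /\ Q (g n) /\ In (g n) l) ->
  exists a, Q a /\ forall N, exists n, N <= n /\ g n = a.
Proof.
  induction l as [|a l IH]; intros H.
  - destruct (H 0) as [n [_ [_ []]]].
  - destruct (classic (forall N, exists n, N <= n /\ g n = a /\ Q (g n))) as [Hy|Hno].
    + exists a. destruct (Hy 0) as [n [_ [Ha Hq]]]. rewrite Ha in Hq. split; auto.
      intros N. destruct (Hy N) as [n1 [? [? ?]]]; eauto.
    + apply not_all_ex_not in Hno. destruct Hno as [N0 HN0].
      apply IH. intros N. destruct (H (max N N0)) as [n [Hle [Hq Hin]]].
      exists n. split; [lia|]. split; auto. destruct Hin as [Heq|Hin]; auto.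
      exfalso. apply HN0. exists n. split; [lia|]. auto.
Qed.

Section Generic.
Variables (P G : Type) (is_eve : P -> bool)
          (Delta : list ((P * list G) * (P * list G))) (Omega : P -> nat).

Local Notation C := (config P G).
Local Notation mv := (move P G Delta).
Local Notation ev c := (is_eve (fst c)).

Inductive APath : C -> C -> Prop :=
| ap_refl c : APath c c
| ap_step c c' e : ev c = false -> mv c c' -> APath c' e -> APath c e.

Inductive Win : C -> Prop :=
| win_intro d c' : ev d = true -> mv d c' ->
    (forall e, APath c' e -> ev e = true -> Win e) -> Win d.

Definition prec (s : C -> C) (e d : C) := APath (s d) e /\ ev e = true.
Definition Good (D : C -> Prop) (s : C -> C) := forall d, D d ->
  ev d = true /\ mv d (s d) /\ (forall e, APath (s d) e -> ev e = true -> D e).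
Definition Wfs (D : C -> Prop) (s : C -> C) := forall d, D d -> Acc (prec s) d.

Lemma APath_eve c e : ev c = true -> APath c e -> e = c.
Proof. intros H Hp. destruct Hp; auto. congruence. Qed.

Lemma APath_snoc x y z : APath x y -> ev y = false -> mv y z -> APath x z.
Proof.
  induction 1; intros.
  - eapply ap_step; eauto. constructor.
  - eapply ap_step; eauto.
Qed.

Lemma acc_transfer D s s' : Good D s -> (forall x, D x -> s' x = s x) ->
  forall x, D x -> Acc (prec s) x -> Acc (prec s') x.
Proof.
  intros HG Hs x Dx Hacc. revert Dx. induction Hacc as [x _ IH]. intros Dx.
  constructor. intros e [Hp He]. rewrite Hs in Hp by assumption.
  apply IH. split; auto. apply (proj2 (proj2 (HG x Dx))); auto.
Qed.

Lemma merge (I : Type) (E : I -> Prop) (enc : I -> nat)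
  (enc_inj : forall a b, enc a = enc b -> a = b)
  (F : I -> (C -> Prop) * (C -> C)) :
  (forall k, E k -> Good (fst (F k)) (snd (F k)) /\ Wfs (fst (F k)) (snd (F k))) ->
  exists D s, (forall k d, E k -> fst (F k) d -> D d) /\ Good D s /\ Wfs D s.
Proof.
  intros HF.
  destruct (classic (exists k, E k)) as [[k0 _]|Hno].
  2:{ exists (fun _ => False), (fun x => x). split; [|split].
      - intros k d Ek. exfalso; eauto.
      - intros d [].
      - intros d []. }
  pose (Pm := fun d k => E k /\ fst (F k) d /\ forall k', E k' -> fst (F k') d -> enc k <= enc k').
  pose (km := fun d => epsilon (inhabits k0) (Pm d)).
  assert (Hkm : forall k d, E k -> fst (F k) d -> Pm d (km d)).
  { intros k d Ek Fd. apply epsilon_spec.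
    destruct (enc_min I enc (fun k => E k /\ fst (F k) d)) as [m [[Em Fm] Hm]]; eauto.
    exists m. split; auto. }
  exists (fun d => exists k, E k /\ fst (F k) d), (fun d => snd (F (km d)) d).
  split; [|split].
  - eauto.
  - intros d [k [Ek Fd]]. destruct (Hkm k d Ek Fd) as [Em [Fm _]].
    destruct (HF _ Em) as [HG _]. destruct (HG d Fm) as [H1 [H2 H3]].
    split; auto. split; auto. intros e Hp He. exists (km d). split; auto.
  - intros d [k [Ek Fd]].
    remember (enc k) as n eqn:Hn. revert k d Ek Fd Hn.
    induction n as [n IHn] using (well_founded_induction lt_wf).
    intros k d Ek Fd Hn.
    assert (Hacc : Acc (prec (snd (F k))) d) by (apply (proj2 (HF k Ek)); auto).
    revert Fd. induction Hacc as [d _ IH]. intros Fd.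
    destruct (Hkm k d Ek Fd) as [Em [Fm Hmin]].
    assert (Hle := Hmin k Ek Fd).
    destruct (Nat.lt_ge_cases (enc (km d)) (enc k)) as [Hlt|Hge].
    + eapply (IHn (enc (km d))); eauto. lia.
    + assert (Heq : km d = k) by (apply enc_inj; lia). constructor. intros e [Hp He].
      cbv beta in Hp. rewrite Heq in Hp. apply IH.
      * split; auto.
      * apply (proj1 (HF k Ek) d Fd); auto.
Qed.

Variable enc : C -> nat.
Hypothesis enc_inj : forall a b, enc a = enc b -> a = b.

Lemma win_local d : Win d -> exists D s, D d /\ Good D s /\ Wfs D s.
Proof.
  induction 1 as [d c' Hev Hmv Hall IH].
  pose (E := fun e => APath c' e /\ ev e = true).
  pose (F := fun e => epsilon (inhabits ((fun _ : C => False), (fun x : C => x)))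
     (fun p => E e -> fst p e /\ Good (fst p) (snd p) /\ Wfs (fst p) (snd p))).
  assert (HF : forall e, E e -> fst (F e) e /\ Good (fst (F e)) (snd (F e)) /\ Wfs (fst (F e)) (snd (F e))).
  { intros e Ee. apply (epsilon_spec (inhabits ((fun _ : C => False), (fun x : C => x)))
     (fun p => E e -> fst p e /\ Good (fst p) (snd p) /\ Wfs (fst p) (snd p))); auto.
    destruct Ee as [Hp He]. destruct (IH e Hp He) as [D [s [H1 [H2 H3]]]].
    exists (D, s). auto. }
  destruct (merge C E enc enc_inj F) as [Dm [sm [Hsub [HG HW]]]].
  { intros k Ek. destruct (HF k Ek) as [_ [? ?]]. auto. }
  assert (HE : forall e, E e -> Dm e).
  { intros e Ee. apply (Hsub e); auto. apply (HF e Ee). }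
  pose (s' := fun x => if excluded_middle_informative (Dm x) then sm x else c').
  assert (Hs' : forall x, Dm x -> s' x = sm x).
  { intros x Hx. unfold s'. destruct (excluded_middle_informative (Dm x)); tauto. }
  assert (HG' : Good Dm s').
  { intros x Hx. rewrite Hs' by auto. apply HG; auto. }
  exists (fun x => x = d \/ Dm x), s'. split; [auto|split].
  - intros x [->|Hx].
    + destruct (excluded_middle_informative (Dm d)) as [Hd|Hd].
      * destruct (HG' d Hd) as [? [? ?]]. refine (conj _ (conj _ _)); auto.
      * assert (s' d = c') by (unfold s'; destruct (excluded_middle_informative (Dm d)); tauto).
        rewrite H. refine (conj _ (conj _ _)); auto. intros e Hp He. right. apply HE. split; auto.
    + destruct (HG' x Hx) as [? [? ?]]. refine (conj _ (conj _ _)); auto.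
  - intros x [->|Hx].
    + destruct (excluded_middle_informative (Dm d)) as [Hd|Hd].
      * apply (acc_transfer Dm sm s'); auto.
      * assert (s' d = c') by (unfold s'; destruct (excluded_middle_informative (Dm d)); tauto).
        constructor. intros e [Hp He]. rewrite H in Hp.
        assert (Dm e) by (apply HE; split; auto).
        apply (acc_transfer Dm sm s'); auto.
    + apply (acc_transfer Dm sm s'); auto.
Qed.

Lemma win_global : exists D s, (forall d, Win d -> D d) /\ Good D s /\ Wfs D s /\
   eve_strategy P G is_eve Delta s.
Proof.
  pose (F := fun e => epsilon (inhabits ((fun _ : C => False), (fun x : C => x)))
     (fun p => Win e -> fst p e /\ Good (fst p) (snd p) /\ Wfs (fst p) (snd p))).
  assert (HF : forall e, Win e -> fst (F e) e /\ Good (fst (F e)) (snd (F e)) /\ Wfs (fst (F e)) (snd (F e))).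
  { intros e Ee. apply (epsilon_spec (inhabits ((fun _ : C => False), (fun x : C => x)))
     (fun p => Win e -> fst p e /\ Good (fst p) (snd p) /\ Wfs (fst p) (snd p))); auto.
    destruct (win_local e Ee) as [D [s [H1 [H2 H3]]]].
    exists (D, s). auto. }
  destruct (merge C Win enc enc_inj F) as [Dm [sm [Hsub [HG HW]]]].
  { intros k Ek. destruct (HF k Ek) as [_ [? ?]]. auto. }
  pose (s' := fun x => if excluded_middle_informative (Dm x) then sm x
                       else epsilon (inhabits x) (fun y => mv x y)).
  assert (Hs' : forall x, Dm x -> s' x = sm x).
  { intros x Hx. unfold s'. destruct (excluded_middle_informative (Dm x)); tauto. }
  assert (HG' : Good Dm s').
  { intros x Hx. rewrite Hs' by auto. apply HG; auto. }
  exists Dm, s'. split; [|split; [|split]].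
  - intros d Hd. apply (Hsub d); auto. apply HF; auto.
  - auto.
  - intros x Hx. apply (acc_transfer Dm sm s'); auto.
  - intros c Hc Hm. unfold s'. destruct (excluded_middle_informative (Dm c)).
    + apply HG; auto.
    + apply epsilon_spec. auto.
Qed.

Hypothesis Omega_adam : forall p, is_eve p = false -> Omega p = 0.

Definition St := map (fun rl : (P * list G) * (P * list G) => fst (snd rl)) Delta.

Lemma move_target c c' : mv c c' -> In (fst c') St.
Proof.
  intros [p [alpha [q [beta [w [Hin [_ ->]]]]]]]. simpl.
  unfold St. apply in_map_iff. exists ((p, alpha), (q, beta)). auto.
Qed.

Theorem win_eve_wins c0 : Win c0 -> eve_wins P G is_eve Delta Omega c0.
Proof.
  intros Hw. destruct win_global as [D [s [HD [HG [HW Hst]]]]].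
  exists s. split; auto.
  pose (PInv := fun c => D c \/ (ev c = false /\ exists d, D d /\ APath (s d) c)).
  assert (Hstep : forall c c', PInv c -> mv c c' -> (ev c = true -> c' = s c) -> PInv c').
  { intros c c' [Hc|[Hc [d [Dd Hp]]]] Hm Hcons.
    - destruct (HG c Hc) as [He [_ Hcl]]. rewrite (Hcons He).
      destruct (ev (s c)) eqn:E.
      + left. apply Hcl; auto. constructor.
      + right. split; auto. exists c. split; auto. constructor.
    - destruct (ev c') eqn:E.
      + left. apply (proj2 (proj2 (HG d Dd))); auto. eapply APath_snoc; eauto.
      + right. split; auto. exists d. split; auto. eapply APath_snoc; eauto. }
  assert (Hc0 : D c0) by auto.
  split.
  - intros n f H0 Hmv Hstk Hcons.
    assert (Hi : forall i, i <= n -> PInv (f i)).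
    { induction i; intros Hle.
      - left. rewrite H0. auto.
      - apply (Hstep (f i)). apply IHi; lia. apply Hmv; lia. intros; apply Hcons; auto; lia. }
    destruct (Hi n (le_n n)) as [Hd|[Hf _]]; auto.
    exfalso. apply (Hstk (s (f n))). apply HG; auto.
  - intros f H0 Hmv Hcons.
    assert (Hi : forall i, PInv (f i)).
    { induction i.
      - left. rewrite H0. auto.
      - apply (Hstep (f i)); auto. }
    assert (Hev : forall x, Acc (prec s) x -> forall i, f i = x -> D x ->
              exists N, forall m, N <= m -> ev (f m) = false).
    { intros x Hacc. induction Hacc as [x _ IH]. intros i Hfi Dx.
      destruct (classic (exists m, i < m /\ ev (f m) = true)) as [Hex|Hno].
      - destruct (nat_min _ Hex) as [m [[Him Hem] Hmin]].
        assert (Hpath : forall k, i < k <= m -> APath (s (f i)) (f k)).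
        { intros k. induction k; intros Hk. lia.
          destruct (Nat.eq_dec i k) as [<-|Hne].
          - rewrite Hcons. constructor. rewrite Hfi. apply HG; auto.
          - eapply APath_snoc. apply IHk. lia.
            destruct (ev (f k)) eqn:E; auto. assert (m <= k) by (apply Hmin; split; auto; lia). lia.
            auto. }
        assert (Hpm : APath (s x) (f m)) by (rewrite <- Hfi; apply Hpath; lia).
        apply (IH (f m)) with m; auto. split; auto.
        apply (proj2 (proj2 (HG x Dx))); auto.
      - exists (S i). intros m Hm. destruct (ev (f m)) eqn:E; auto.
        exfalso. apply Hno. exists m. split; [lia|auto]. }
    destruct (Hev c0 (HW c0 Hc0) 0 H0 Hc0) as [N0 HN0].
    destruct (pigeon St (fun n => fst (f n)) (fun a => is_eve a = false)) as [a [Ha Hinf]].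
    { intros N. exists (S (max N N0)). split; [lia|]. split.
      - apply HN0. lia.
      - apply (move_target (f (max N N0))). auto. }
    exists a. split; [exact Hinf|]. rewrite (Omega_adam a Ha). split; auto.
    intros q Hq. destruct (Hq N0) as [n [Hn Hfn]]. rewrite <- Hfn.
    rewrite Omega_adam; auto.
Qed.

End Generic.

Definition stk (y : list RN) : list gsym := None :: map Some y.

Lemma stk_app y r : stk (y ++ [r]) = stk y ++ [Some r].
Proof. unfold stk. rewrite map_app. reflexivity. Qed.

Lemma stk_pop y w r : stk y = w ++ [Some r] -> exists y', y = y' ++ [r] /\ w = stk y'.
Proof.
  destruct y as [|a y] using rev_ind; intros H.
  - unfold stk in H. simpl in H. destruct w as [|b [|c w]]; simpl in H; try discriminate; inversion H; destruct w; discriminate.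
  - rewrite stk_app in H. apply app_inj_tail in H. destruct H as [H1 H2].
    inversion H2; subst. eauto.
Qed.

Lemma stk_none y w : stk y = w ++ [None] -> y = [].
Proof.
  destruct y as [|a y] using rev_ind; intros H; auto.
  rewrite stk_app in H. apply app_inj_tail in H. destruct H as [_ H]. discriminate.
Qed.

Lemma index_from_iff {A : Type} (l : list A) : forall k n a,
  In (n, a) (index_from k l) <-> k <= n /\ nth_error l (n - k) = Some a.
Proof.
  induction l as [|b l IH]; intros k n a; simpl.
  - split; [tauto|]. intros [_ H]. destruct (n - k); discriminate.
  - rewrite IH. split.
    + intros [H|[H1 H2]].
      * inversion H; subst. rewrite Nat.sub_diag. auto.
      * split; [lia|]. replace (n - k) with (S (n - S k)) by lia. auto.
    + intros [H1 H2]. destruct (Nat.eq_dec n k) as [->|Hne].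
      * rewrite Nat.sub_diag in H2. inversion H2; subst. auto.
      * right. split; [lia|]. replace (n - k) with (S (n - S k)) in H2 by lia. auto.
Qed.

Lemma index0 {A : Type} (l : list A) n a : In (n, a) (index_from 0 l) <-> nth_error l n = Some a.
Proof. rewrite index_from_iff. rewrite Nat.sub_0_r. split; [tauto|]. split; [lia|auto]. Qed.

Lemma run_snoc A p u r q : nfa_run A p (u ++ [r]) q ->
  exists p', nfa_run A p u p' /\ In (p', r, q) (nfa_trans A).
Proof.
  revert p. induction u as [|a u IH]; intros p H; simpl in H.
  - inversion H as [|p0 r0 q0 w0 s0 Ht Hr]; subst. inversion Hr; subst. exists p. split; auto. constructor.
  - inversion H as [|p0 r0 q0 w0 s0 Ht Hr]; subst. destruct (IH _ Hr) as [p' [H1 H2]]. exists p'. split; auto.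
    econstructor; eauto.
Qed.

Section Spec.
Variables (T : TBox) (L : CN) (nfaH : nat -> nfa) (nfaG : nat -> nat -> nfa).

Inductive rspec : grule -> Prop :=
| rs_win : rspec ((QC L, [None]), (Pwin, [None]))
| rs_start i ax qf : nth_error T i = Some ax -> In qf (nfa_final (nfaH i)) ->
    rspec ((QC (ax_B ax), []), (QH i qf, []))
| rs_pop i ax p r q : nth_error T i = Some ax -> In (p, r, q) (nfa_trans (nfaH i)) ->
    rspec ((QH i q, [Some r]), (QH i p, []))
| rs_tau i ax : nth_error T i = Some ax ->
    rspec ((QH i (nfa_init (nfaH i)), []), (Ptau i, []))
| rs_pick i ax j G A : nth_error T i = Some ax -> nth_error (ax_lhs ax) j = Some (G, A) ->
    rspec ((Ptau i, []), (QG i j (nfa_init (nfaG i j)), []))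
| rs_push i ax j G A p r q : nth_error T i = Some ax -> nth_error (ax_lhs ax) j = Some (G, A) ->
    In (p, r, q) (nfa_trans (nfaG i j)) ->
    rspec ((QG i j p, []), (QG i j q, [Some r]))
| rs_fin i ax j G A qf : nth_error T i = Some ax -> nth_error (ax_lhs ax) j = Some (G, A) ->
    In qf (nfa_final (nfaG i j)) ->
    rspec ((QG i j qf, []), (QC A, [])).

Lemma rules_spec rl : In rl (game_rules T L nfaH nfaG) <-> rspec rl.
Proof.
  unfold game_rules. simpl. rewrite in_flat_map. split.
  - intros [<-|[[i ax] [Hin Hr]]]; [constructor|].
    apply index0 in Hin. simpl in Hr. unfold axiom_rules in Hr.
    rewrite !in_app_iff in Hr. destruct Hr as [Hr|[Hr|[Hr|Hr]]].
    + apply in_map_iff in Hr. destruct Hr as [q [<- Hq]]. eapply rs_start; eauto.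
    + apply in_map_iff in Hr. destruct Hr as [[[p r] q] [<- Hq]]. eapply rs_pop; eauto.
    + destruct Hr as [<-|[]]. eapply rs_tau; eauto.
    + apply in_flat_map in Hr. destruct Hr as [[j [G A]] [Hj Hr]].
      apply index0 in Hj. simpl in Hr. destruct Hr as [<-|Hr].
      * eapply rs_pick; eauto.
      * rewrite in_app_iff in Hr. destruct Hr as [Hr|Hr]; apply in_map_iff in Hr.
        -- destruct Hr as [[[p r] q] [<- Hq]]. eapply rs_push; eauto.
        -- destruct Hr as [q [<- Hq]]. eapply rs_fin; eauto.
  - intros H. destruct H; [left; reflexivity|right..];
      exists (i, ax); (split; [apply index0; auto|]); simpl; unfold axiom_rules;
      rewrite !in_app_iff.
    + left. apply in_map_iff. eauto.
    + right; left. apply in_map_iff. exists (p, r, q). auto.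
    + right; right; left. left. auto.
    + right; right; right. apply in_flat_map. exists (j, (G, A)).
      split; [apply index0; auto|]. left. auto.
    + right; right; right. apply in_flat_map. exists (j, (G, A)).
      split; [apply index0; auto|]. simpl. right. apply in_app_iff. left. apply in_map_iff.
      exists (p, r, q). auto.
    + right; right; right. apply in_flat_map. exists (j, (G, A)).
      split; [apply index0; auto|]. simpl. right. apply in_app_iff. right. apply in_map_iff.
      exists qf. auto.
Qed.

End Spec.

Lemma word_rel_app I u v x y : word_rel I (u ++ v) x y <-> exists z, word_rel I u x z /\ word_rel I v z y.
Proof.
  revert x. induction u as [|a u IH]; intros x; simpl.
  - split; [eauto|]. intros [z [-> H]]. auto.
  - split.
    + intros [z1 [H1 H2]]. apply IH in H2. destruct H2 as [z [H2 H3]]. eauto.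
    + intros [z [[z1 [H1 H2]] H3]]. exists z1. split; auto. apply IH. eauto.
Qed.

Lemma conj_all_sem I l x : csem I (conj_all l) x <->
  (forall G A, In (G, A) l -> csem I (CAll G (CName A)) x).
Proof.
  induction l as [|[G A] l IH].
  - simpl. split; auto. intros _ G A [].
  - destruct l as [|GA l'].
    + simpl. split.
      * intros H G' A' [E|[]]. inversion E; subst. exact H.
      * intros H. apply (H G A). left; auto.
    + change (csem I (CAll G (CName A)) x /\ csem I (conj_all (GA :: l')) x <->
        (forall G0 A0, In (G0, A0) ((G, A) :: GA :: l') -> csem I (CAll G0 (CName A0)) x)).
      rewrite IH. split.
      * intros [H1 H2] G' A' [E|Hin]. inversion E; subst; auto. auto.
      * intros H. split. apply H; left; auto. intros; apply H; right; auto.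
Qed.

Section Dir1.
Variables (T : TBox) (L : CN) (nfaH : nat -> nfa) (nfaG : nat -> nat -> nfa).
Hypothesis hauto : good_automata T nfaH nfaG.

Local Notation rules := (game_rules T L nfaH nfaG).
Local Notation mv := (move gstate gsym rules).
Local Notation APathG := (APath gstate gsym g_is_eve rules).
Local Notation WinG := (Win gstate gsym g_is_eve rules).

Inductive Der : CN -> list RN -> Prop :=
| der_base : Der L []
| der_step i ax x u : nth_error T i = Some ax -> lang (ax_H ax) u ->
    (forall j G A v, nth_error (ax_lhs ax) j = Some (G, A) -> lang G v -> Der A (x ++ v)) ->
    Der (ax_B ax) (x ++ u).

Definition tree : interp :=
  {| dom := list RN; dom_inhabited := inhabits []; cint := Der;
     rint := fun r x y => y = x ++ [r] |}.

Lemma tree_word w : forall (x y : dom tree), word_rel tree w x y <-> y = x ++ w.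
Proof.
  induction w as [|r w IH]; intros x y; simpl.
  - rewrite app_nil_r. split; auto.
  - split.
    + intros [z [-> H]]. apply IH in H. subst. rewrite <- app_assoc. reflexivity.
    + intros ->. exists (x ++ [r]). split; auto. apply IH. rewrite <- app_assoc. reflexivity.
Qed.

Lemma tree_model : is_model tree T.
Proof.
  intros ax Hin x Hl. apply In_nth_error in Hin. destruct Hin as [i Hi].
  unfold ax_lhs_concept in Hl. rewrite conj_all_sem in Hl.
  unfold ax_rhs_concept. simpl. intros y [w [Hw Hr]]. apply tree_word in Hr. subst y.
  apply der_step with i; auto.
  intros j G A v Hj Hv. apply nth_error_In in Hj.
  apply (Hl G A Hj). exists v. split; auto. apply tree_word. reflexivity.
Qed.

Lemma mk_move p alpha q beta w :
  rspec T L nfaH nfaG ((p, alpha), (q, beta)) -> mv (p, w ++ alpha) (q, w ++ beta).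
Proof. intros H. exists p, alpha, q, beta, w. split; auto. apply rules_spec. auto. Qed.

Lemma mk_move0 p q w :
  rspec T L nfaH nfaG ((p, []), (q, [])) -> mv (p, w) (q, w).
Proof. intros H. pose proof (mk_move p [] q [] w H) as K. rewrite app_nil_r in K. exact K. Qed.

Lemma mk_move_pop p r q w :
  rspec T L nfaH nfaG ((p, [Some r]), (q, [])) -> mv (p, w ++ [Some r]) (q, w).
Proof. intros H. pose proof (mk_move p [Some r] q [] w H) as K. rewrite app_nil_r in K. exact K. Qed.

Lemma move_inv c c' : mv c c' -> exists p alpha q beta w,
  rspec T L nfaH nfaG ((p, alpha), (q, beta)) /\ c = (p, w ++ alpha) /\ c' = (q, w ++ beta).
Proof.
  intros [p [alpha [q [beta [w [H1 H2]]]]]]. apply rules_spec in H1. exists p, alpha, q, beta, w. auto.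
Qed.

Lemma nth_uniq {A : Type} (l : list A) i a b : nth_error l i = Some a -> nth_error l i = Some b -> a = b.
Proof. intros H1 H2. rewrite H1 in H2. inversion H2. auto. Qed.

Lemma qg_path i ax j G A : nth_error T i = Some ax -> nth_error (ax_lhs ax) j = Some (G, A) ->
  forall c e, APathG c e -> g_is_eve (fst e) = true ->
  forall p y, c = (QG i j p, stk y) ->
  exists v qf, nfa_run (nfaG i j) p v qf /\ In qf (nfa_final (nfaG i j)) /\ e = (QC A, stk (y ++ v)).
Proof.
  intros Hi Hj c e Hp. induction Hp as [c|c c' e Hc Hm Hp IH]; intros He p y ->.
  - discriminate.
  - apply move_inv in Hm. destruct Hm as [p0 [al [q0 [be [w [Hr [E1 E2]]]]]]].
    inversion E1; subst. inversion Hr; subst.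
    + rewrite app_nil_r in H1. subst w.
      destruct (IH He q (y ++ [r])) as [v [qf [Ka [Kb Kc]]]].
      { rewrite stk_app. reflexivity. }
      exists (r :: v), qf. split; [econstructor; eauto|]. split; auto.
      rewrite Kc. rewrite <- app_assoc. reflexivity.
    + rewrite app_nil_r in H1. subst w.
      assert (ax0 = ax) by (eapply nth_uniq; eauto). subst ax0.
      assert ((G0, A0) = (G, A)) by (eapply nth_uniq; eauto). inversion H; subst.
      apply APath_eve in Hp; auto. subst e.
      exists [], p. split; [constructor|]. split; auto. rewrite !app_nil_r. reflexivity.
Qed.

Lemma ptau_path i ax : nth_error T i = Some ax ->
  forall x e, APathG (Ptau i, stk x) e -> g_is_eve (fst e) = true ->
  exists j G A v, nth_error (ax_lhs ax) j = Some (G, A) /\ nfa_lang (nfaG i j) v /\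
    e = (QC A, stk (x ++ v)).
Proof.
  intros Hi x e Hp He. inversion Hp as [c0|c c' e0 Hc Hm Hp']; subst.
  - discriminate.
  - apply move_inv in Hm. destruct Hm as [p0 [al [q0 [be [w [Hr [E1 E2]]]]]]].
    inversion E1; subst. inversion Hr; subst. rewrite app_nil_r in H1; subst w.
    assert (ax0 = ax) by (eapply nth_uniq; eauto). subst ax0.
    match goal with H : nth_error (ax_lhs _) _ = Some _ |- _ => rename H into Hj0 end.
    destruct (qg_path i ax j G A Hi Hj0 _ _ Hp' He (nfa_init (nfaG i j)) x) as [v [qf [Ka [Kb Kc]]]].
    { rewrite app_nil_r. reflexivity. }
    exists j, G, A, v. split; auto. split; auto. exists qf. auto.
Qed.

Lemma der_win A y : Der A y -> WinG (QC A, stk y).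
Proof.
  induction 1 as [|i ax x u Hi Hu Hprem IH].
  - apply win_intro with (Pwin, [None]); auto.
    + apply (mk_move _ _ _ _ []). constructor.
    + intros e Hp He. inversion Hp; subst. discriminate.
      apply move_inv in H0. destruct H0 as [p0 [al [q0 [be [w [Hr [E1 E2]]]]]]].
      inversion E1; subst. inversion Hr.
  - pose proof (proj1 (hauto i ax Hi) u) as HH.
    apply HH in Hu. destruct Hu as [qf [Hqf Hrun]].
    assert (Htau : WinG (QH i (nfa_init (nfaH i)), stk x)).
    { apply win_intro with (Ptau i, stk x); auto.
      - apply mk_move0. econstructor; eauto.
      - intros e Hp He. destruct (ptau_path i ax Hi x e Hp He) as [j [G [A [v [Hj [Hl ->]]]]]].
        apply (IH j G A v Hj).
        destruct (proj2 (proj2 (hauto i ax Hi)) j G A Hj) as [HG _]. apply HG; auto. }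
    assert (Hq : forall u q, nfa_run (nfaH i) (nfa_init (nfaH i)) u q -> WinG (QH i q, stk (x ++ u))).
    { intros u0. induction u0 as [|r u0 IHu] using rev_ind; intros q Hr.
      - inversion Hr; subst. rewrite app_nil_r. auto.
      - apply run_snoc in Hr. destruct Hr as [p' [Hr Ht]].
        apply win_intro with (QH i p', stk (x ++ u0)); auto.
        + rewrite app_assoc, stk_app. apply mk_move_pop. econstructor; eauto.
        + intros e Hp He. apply APath_eve in Hp; auto. subst e. auto. }
    apply win_intro with (QH i qf, stk (x ++ u)); auto.
    + apply mk_move0. econstructor; eauto.
    + intros e Hp He. apply APath_eve in Hp; auto. subst e. auto.
Qed.

End Dir1.

Lemma to_nat_inj a b : Cantor.to_nat a = Cantor.to_nat b -> a = b.
Proof. intros H. rewrite <- (Cantor.cancel_of_to a), <- (Cantor.cancel_of_to b), H. auto. Qed.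

Definition enc_g (p : gstate) : nat :=
  match p with
  | QC a => Cantor.to_nat (0, a)
  | QH i q => Cantor.to_nat (1, Cantor.to_nat (i, q))
  | Ptau i => Cantor.to_nat (2, i)
  | QG i j p => Cantor.to_nat (3, Cantor.to_nat (i, Cantor.to_nat (j, p)))
  | Pwin => Cantor.to_nat (4, 0)
  end.

Definition enc_o (o : gsym) : nat := match o with None => 0 | Some r => S r end.

Fixpoint enc_l (l : list gsym) : nat :=
  match l with [] => 0 | x :: l => S (Cantor.to_nat (enc_o x, enc_l l)) end.

Definition enc_c (c : config gstate gsym) : nat := Cantor.to_nat (enc_g (fst c), enc_l (snd c)).

#[local] Opaque Cantor.to_nat.
Lemma enc_c_inj a b : enc_c a = enc_c b -> a = b.
Proof.
  destruct a as [p l], b as [p' l']. unfold enc_c. simpl. intros H.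
  apply to_nat_inj in H. inversion H as [[H1 H2]].
  f_equal.
  - destruct p, p'; simpl in H1; apply to_nat_inj in H1; inversion H1; subst; auto;
      repeat match goal with K : Cantor.to_nat _ = Cantor.to_nat _ |- _ =>
        apply to_nat_inj in K; inversion K; subst; clear K end; auto.
  - clear H H1. revert l' H2. induction l as [|x l IH]; intros [|x' l'] E; simpl in E;
      try discriminate; auto.
    inversion E as [E']. apply to_nat_inj in E'. inversion E' as [[Ex El]].
    f_equal; auto. destruct x, x'; simpl in Ex; try discriminate; auto.
Qed.

Section Dir2.
Variables (T : TBox) (L : CN) (nfaH : nat -> nfa) (nfaG : nat -> nat -> nfa).
Hypothesis hauto : good_automata T nfaH nfaG.
Variables (I : interp) (x0 : dom I).
Hypothesis Hmodel : is_model I T.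
Hypothesis HL : cint I L x0.

Local Notation rules := (game_rules T L nfaH nfaG).
Local Notation mv := (move gstate gsym rules).

Definition Inv (c : config gstate gsym) (k : nat) : Prop :=
  match fst c with
  | QC A => exists y z, snd c = stk y /\ word_rel I y x0 z /\ ~ cint I A z
  | QH i q => exists ax y u z zf qf, nth_error T i = Some ax /\ snd c = stk y /\
      nfa_run (nfaH i) q u qf /\ In qf (nfa_final (nfaH i)) /\
      word_rel I y x0 z /\ word_rel I u z zf /\ ~ cint I (ax_B ax) zf
  | Ptau i => exists ax y z, nth_error T i = Some ax /\ snd c = stk y /\
      word_rel I y x0 z /\ ~ csem I (ax_lhs_concept ax) z
  | QG i j p => exists ax G A y v z zf qf, nth_error T i = Some ax /\
      nth_error (ax_lhs ax) j = Some (G, A) /\ snd c = stk y /\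
      nfa_run (nfaG i j) p v qf /\ In qf (nfa_final (nfaG i j)) /\
      word_rel I y x0 z /\ word_rel I v z zf /\ ~ cint I A zf /\ length v = k
  | Pwin => False
  end.

Definition isQG (p : gstate) := match p with QG _ _ _ => True | _ => False end.
Definition isQC (p : gstate) := match p with QC _ => True | _ => False end.

Definition prog (c : config gstate gsym) (k : nat) (c' : config gstate gsym) (k' : nat) : Prop :=
  match fst c with
  | Ptau _ => isQG (fst c')
  | QG _ _ _ => (isQG (fst c') /\ k' < k) \/ isQC (fst c')
  | _ => True
  end.

Lemma eve_step c k c' : Inv c k -> g_is_eve (fst c) = true -> mv c c' -> exists k', Inv c' k'.
Proof.
  intros Hi He Hm. apply (move_inv T L nfaH nfaG) in Hm.
  destruct Hm as [p [al [q [be [w [Hr [-> ->]]]]]]].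
  inversion Hr; subst; unfold Inv in *; simpl in *; try discriminate.
  - destruct Hi as [y [z [Hs [Hw Hn]]]]. symmetry in Hs; apply stk_none in Hs. subst y.
    simpl in Hw. subst z. contradiction.
  - exists 0. destruct Hi as [y [z [Hs [Hw Hn]]]].
    exists ax, y, [], z, z, qf. rewrite app_nil_r in *. repeat split; auto. constructor.
  - exists 0. destruct Hi as [ax' [y [u [z [zf [qf [Hax [Hs [Hrun [Hf [Hw [Hu Hn]]]]]]]]]]]].
    symmetry in Hs; apply stk_pop in Hs. destruct Hs as [y' [-> ->]].
    apply word_rel_app in Hw. destruct Hw as [z1 [Hw1 [z' [Hr' Heq]]]]. simpl in Heq. subst z'.
    exists ax', y', (r :: u), z1, zf, qf. rewrite app_nil_r.
    repeat split; auto. econstructor; eauto. simpl. eauto.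
  - exists 0. destruct Hi as [ax' [y [u [z [zf [qf [Hax [Hs [Hrun [Hf [Hw [Hu Hn]]]]]]]]]]]].
    match goal with K : nth_error T i = Some ax |- _ => rename K into Hax0 end.
    assert (ax' = ax) by (eapply nth_uniq; eauto). subst ax'.
    exists ax, y, z. rewrite app_nil_r in *. repeat split; auto.
    intros Hl. apply Hn.
    assert (Hlang : lang (ax_H ax) u).
    { apply (proj1 (hauto i ax Hax0)). exists qf. auto. }
    apply (Hmodel ax (nth_error_In _ _ Hax0) z Hl). exists u. auto.
Qed.

Lemma adam_step c k : Inv c k -> g_is_eve (fst c) = false ->
  exists c' k', mv c c' /\ Inv c' k' /\ prog c k c' k'.
Proof.
  destruct c as [p st]. intros Hi He. unfold Inv in Hi. destruct p; simpl in *; try discriminate; try contradiction.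
  -
    destruct Hi as [ax [y [z [Hax [-> [Hw Hn]]]]]].
    unfold ax_lhs_concept in Hn. rewrite conj_all_sem in Hn.
    apply not_all_ex_not in Hn. destruct Hn as [G Hn].
    apply not_all_ex_not in Hn. destruct Hn as [A Hn].
    apply imply_to_and in Hn. destruct Hn as [Hin Hn]. simpl in Hn.
    apply not_all_ex_not in Hn. destruct Hn as [zf Hn].
    apply imply_to_and in Hn. destruct Hn as [[v [Hv Hvw]] Hn].
    apply In_nth_error in Hin. destruct Hin as [j Hj].
    destruct (proj2 (proj2 (hauto n ax Hax)) j G A Hj) as [HG _].
    apply HG in Hv. destruct Hv as [qf [Hqf Hrun]].
    exists (QG n j (nfa_init (nfaG n j)), stk y), (length v). split; [|split].
    + apply mk_move0. econstructor; eauto.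
    + exists ax, G, A, y, v, z, zf, qf. repeat split; auto.
    + cbv. auto.
  -
    destruct Hi as [ax [G [A [y [v [z [zf [qf [Hax [Hj [-> [Hrun [Hf [Hw [Hv [Hn Hk]]]]]]]]]]]]]]]].
    destruct v as [|r v].
    + inversion Hrun; subst. simpl in Hv. subst zf.
      exists (QC A, stk y), 0. split; [|split].
      * apply mk_move0. econstructor; eauto.
      * exists y, z. auto.
      * cbv. auto.
    + inversion Hrun as [|p0 r0 q0 w0 s0 Ht Hr]; subst.
      destruct Hv as [z1 [Hr1 Hv1]].
      exists (QG n n0 q0, stk (y ++ [r])), (length v). split; [|split].
      * rewrite stk_app. rewrite <- (app_nil_r (stk y)) at 1.
        apply mk_move. econstructor; eauto.
      * exists ax, G, A, (y ++ [r]), v, z1, zf, qf. repeat split; auto.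
        apply word_rel_app. exists z. split; auto. simpl. eauto.
      * unfold prog, isQG; simpl. left. split; auto.
Qed.

Lemma dir2_core R : eve_wins gstate gsym g_is_eve rules g_prio (QC R, [None]) -> cint I R x0.
Proof.
  intros [s [Hs [Hfin Hinf]]]. apply NNPP. intros NR.
  pose (c0 := (QC R, [None]) : config gstate gsym).
  assert (Hc0 : Inv c0 0).
  { unfold Inv, c0. simpl. exists [], x0. repeat split; auto. }
  pose (Fstep := fun x : config gstate gsym * nat =>
     if g_is_eve (fst (fst x)) then (s (fst x), epsilon (inhabits 0) (fun k' => Inv (s (fst x)) k'))
     else epsilon (inhabits (c0, 0)) (fun x' => mv (fst x) (fst x') /\ Inv (fst x') (snd x') /\
                                    prog (fst x) (snd x) (fst x') (snd x'))).
  pose (h := fun n => Nat.iter n Fstep (c0, 0)).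
  pose (f := fun n => fst (h n)).
  assert (HhS : forall n, h (S n) = Fstep (h n)) by reflexivity.
  assert (Hstep : forall x, Inv (fst x) (snd x) -> ~ stuck gstate gsym rules (fst x) ->
     mv (fst x) (fst (Fstep x)) /\ Inv (fst (Fstep x)) (snd (Fstep x)) /\
     (g_is_eve (fst (fst x)) = true -> fst (Fstep x) = s (fst x)) /\
     (g_is_eve (fst (fst x)) = false -> prog (fst x) (snd x) (fst (Fstep x)) (snd (Fstep x)))).
  { intros [c k] Hi Hns. unfold Fstep. simpl in *.
    destruct (g_is_eve (fst c)) eqn:E.
    - assert (Hm : mv c (s c)).
      { apply Hs; auto. apply not_all_ex_not in Hns. destruct Hns as [c' Hc'].
        exists c'. apply NNPP. auto. }
      destruct (eve_step c k (s c) Hi E Hm) as [k' Hk']. simpl.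
      split; auto. split; [|split; auto; discriminate].
      apply (epsilon_spec (inhabits 0) (fun k' => Inv (s c) k')). eauto.
    - destruct (adam_step c k Hi E) as [c' [k' H]].
      pose proof (epsilon_spec (inhabits (c0, 0)) (fun x' => mv c (fst x') /\ Inv (fst x') (snd x') /\
                                    prog c k (fst x') (snd x'))) as Hsp.
      simpl in Hsp. destruct Hsp as [H1 [H2 H3]]. { exists (c', k'). exact H. }
      split; auto. split; auto. split; auto. discriminate. }
  assert (Hadam : forall c k, Inv c k -> g_is_eve (fst c) = false -> ~ stuck gstate gsym rules c).
  { intros c k Hi E Hst. destruct (adam_step c k Hi E) as [c' [k' [Hm _]]]. apply (Hst c'); auto. }
  destruct (classic (exists n, stuck gstate gsym rules (f n))) as [Hex|Hno].
  - destruct (nat_min _ Hex) as [n [Hsn Hmin]].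
    assert (Hi : forall m, m <= n -> Inv (f m) (snd (h m))).
    { induction m; intros Hle. exact Hc0.
      unfold f. rewrite HhS. apply Hstep. apply IHm; lia.
      intros Hst. assert (n <= m) by (apply Hmin; auto). lia. }
    destruct (g_is_eve (fst (f n))) eqn:E.
    + assert (Hfl : g_is_eve (fst (f n)) = false); [|congruence].
      apply (Hfin n f); auto.
      * intros i Hi'. unfold f at 2. rewrite HhS. apply Hstep. apply Hi; lia.
        intros Hst. assert (n <= i) by (apply Hmin; auto). lia.
      * intros i Hi' Hei. unfold f at 1. rewrite HhS. apply Hstep; auto. apply Hi; lia.
        intros Hst. assert (n <= i) by (apply Hmin; auto). lia.
    + exfalso. apply (Hadam (f n) (snd (h n))); auto.
  - assert (Hns : forall n, ~ stuck gstate gsym rules (f n)) by (intros n Hn; apply Hno; eauto).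
    assert (Hi : forall m, Inv (f m) (snd (h m))).
    { induction m. exact Hc0. unfold f. rewrite HhS. apply Hstep; [apply IHm|apply (Hns m)]. }
    assert (Hmv : forall n, mv (f n) (f (S n))).
    { intros n. unfold f at 2. rewrite HhS. apply Hstep; [apply Hi|apply Hns]. }
    assert (Hpr : forall n, g_is_eve (fst (f n)) = false ->
                   prog (f n) (snd (h n)) (f (S n)) (snd (h (S n)))).
    { intros n E. unfold f at 2. rewrite !HhS. apply Hstep; [apply Hi|apply Hns|exact E]. }
    assert (Hpar : parity_win gstate gsym g_prio f).
    { apply Hinf; auto. intros i E. unfold f at 1. rewrite HhS. apply Hstep; [apply Hi|apply Hns|exact E]. }
    assert (fromQG : forall k n, isQG (fst (f n)) -> snd (h n) = k ->
               exists m, n <= m /\ isQC (fst (f m))).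
    { induction k as [k IHk] using (well_founded_induction lt_wf).
      intros n Hq Hk. pose proof (Hpr n) as Hp.
      destruct (fst (f n)) as [a|i q|i|i j p|] eqn:E; try contradiction.
      specialize (Hp eq_refl). unfold prog in Hp. rewrite E in Hp.
      destruct Hp as [[Hq' Hlt]|Hc].
      - destruct (IHk (snd (h (S n)))) with (S n) as [m [Hm1 Hm2]]; auto. lia.
        exists m. split; auto. lia.
      - exists (S n). split; auto. }
    assert (fromPtau : forall n i, fst (f n) = Ptau i -> exists m, n <= m /\ isQC (fst (f m))).
    { intros n i E. pose proof (Hpr n) as Hp. rewrite E in Hp. specialize (Hp eq_refl).
      unfold prog in Hp. rewrite E in Hp.
      destruct (fromQG _ (S n) Hp eq_refl) as [m [Hm1 Hm2]]. exists m. split; auto. lia. }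
    assert (fromQH : forall len n i q, fst (f n) = QH i q -> length (snd (f n)) = len ->
               exists m, n <= m /\ isQC (fst (f m))).
    { induction len as [len IHl] using (well_founded_induction lt_wf).
      intros n i q E Hl. pose proof (Hmv n) as Hm.
      apply (move_inv T L nfaH nfaG) in Hm.
      destruct Hm as [p [al [q' [be [w [Hr [E1 E2]]]]]]].
      destruct (f n) as [pn stn] eqn:Efn. simpl in E, Hl. subst pn.
      inversion E1; subst. inversion Hr; subst.
      - destruct (IHl (length w)) with (S n) i p as [m [Hm1 Hm2]].
        + rewrite length_app. simpl. lia.
        + rewrite E2. reflexivity.
        + rewrite E2. simpl. rewrite app_nil_r. reflexivity.
        + exists m. split; auto. lia.
      - destruct (fromPtau (S n) i) as [m [Hm1 Hm2]].
        + rewrite E2. reflexivity.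
        + exists m. split; auto. lia. }
    assert (Hqc : forall N, exists m, N <= m /\ isQC (fst (f m))).
    { intros N. pose proof (Hi N) as HiN. unfold Inv in HiN.
      destruct (fst (f N)) as [a|i q|i|i j p|] eqn:E.
      - exists N. rewrite E. simpl. auto.
      - eapply fromQH; eauto.
      - eapply fromPtau; eauto.
      - eapply fromQG; eauto. rewrite E. simpl. auto.
      - contradiction. }
    destruct (pigeon (St gstate gsym rules) (fun n => fst (f n)) (fun a => g_is_eve a = true))
      as [a [Ha Hinfa]].
    { intros N. destruct (Hqc (S N)) as [m [Hm1 Hm2]]. destruct m as [|m]; [lia|].
      exists (S m). split; [lia|]. split.
      - destruct (fst (f (S m))); simpl in *; auto; contradiction.
      - apply (move_target gstate gsym rules (f m)). auto. }
    destruct Hpar as [p [Hp [Hev Hmax]]].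
    specialize (Hmax a Hinfa). unfold g_prio in *. rewrite Ha in Hmax.
    destruct (g_is_eve p); simpl in *; [discriminate|lia].
Qed.

End Dir2.

Theorem theorem3 (T : TBox) (L R : CN)
    (nfaH : nat -> nfa) (nfaG : nat -> nat -> nfa)
    (hform : forall ax, In ax T -> ax_lhs ax <> [])
    (hauto : good_automata T nfaH nfaG) :
  GT_eve_wins T L nfaH nfaG (QC R, [None]) <-> subsumed T L R.
Proof.
  split.
  - intros H I Hm x HLx. exact (dir2_core T L nfaH nfaG hauto I x Hm HLx R H).
  - intros H. assert (HD : Der T L R []).
    { exact (H (tree T L) (tree_model T L) [] (der_base T L)). }
    apply (der_win T L nfaH nfaG hauto) in HD.
    unfold GT_eve_wins. apply (win_eve_wins _ _ _ _ _ enc_c enc_c_inj).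
    + intros p Hp. unfold g_prio. rewrite Hp. reflexivity.
    + exact HD.
Qed.
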